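(* Let $G$ be a finite group with $|G|\ge 4$, $\sigma$ an automorphism of $G$ of order two, and $S$ a symmetric subset of $G$ closed under conjugation. Let $\rho_1,\dots,\rho_r$ be the irreducible complex representations of $G$ with characters $\chi_1,\dots,\chi_r$, and let $\lambda_i=\frac{1}{\dim\rho_i}\sum_{s\in S}\chi_i(s)$. (1) Up to factors of $\pm1$, the eigenvalues of the adjacency operator of the Cayley sum graph $C_\Sigma(G,S)$ are the numbers $\lambda_i$, each occurring with multiplicity $(\dim\rho_i)^2$, $1\le i\le r$. (2) If $\sigma(S)=S$, then up to factors of $\pm1$, the eigenvalues of the adjacency operator of the twisted Cayley graph $C(G,S)^\sigma$ are the numbers $\lambda_i$, each occurring with multiplicity $(\dim\rho_i)^2$. (3) If $\sigma(S)=S$, then up to factors of $\pm1$, the eigenvalues of the adjacency operator of the twisted Cayley sum graph $C_\Sigma(G,S)^\sigma$ are the numbers $\lambda_i$, each occurring with multiplicity $(\dim\rho_i)^2$. Moreover, the number of factors equal to $1$ in (1) (resp. (2), (3)) equals the average of $|G|$ and the number of solutions $g\in G$ of $g=g^{-1}$ (resp. $g=\sigma(g)$, $g=\sigma(g)^{-1}$).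
   Context: For a finite group $G$, an automorphism $\sigma$ and a subset $S$: $C(G,S)$ has vertex set $G$ and an edge from $x$ to $xs$ for each $s\in S$; $C_\Sigma(G,S)$ has an edge from $x$ to $x^{-1}s$; $C(G,S)^\sigma$ has an edge from $x$ to $\sigma(xs)$; $C_\Sigma(G,S)^\sigma$ has an edge from $x$ to $\sigma(x^{-1}s)$. ''Up to factors of $\pm1$'' means there is a bijection between the two multisets of eigenvalues under which each eigenvalue is sent to itself or its negative; the ''factors of $1$'' are those matched with themselves. *)

(* Defs.v *)
From HB Require Import structures.
From mathcomp Require Import all_boot all_order all_algebra all_fingroup all_solvable all_field all_character.
Set Implicit Arguments. Unset Strict Implicit. Unset Printing Implicit Defensive.
Import Order.TTheory GRing.Theory Num.Theory.
Local Open Scope ring_scope.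

Section Defs.
Variable gT : finGroupType.

Definition vtx (i : 'I_#|gT|) : gT := enum_val i.

Definition adjmx (f : gT -> gT -> gT) (S : {set gT}) : 'M[algC]_#|gT| :=
  \matrix_(i, j) (#|[set s in S | vtx j == f (vtx i) s]|)%:R.

Definition cay_edge (x s : gT) : gT := (x * s)%g.
Definition caysum_edge (x s : gT) : gT := (x^-1 * s)%g.
Definition tcay_edge (sigma : {perm gT}) (x s : gT) : gT := sigma (x * s)%g.
Definition tcaysum_edge (sigma : {perm gT}) (x s : gT) : gT := sigma (x^-1 * s)%g.

Definition lam (S : {set gT}) (i : Iirr [set: gT]) : algC :=
  (\sum_(s in S) 'chi_i s) / 'chi_i 1%g.

Definition irr_mult_seq : seq (Iirr [set: gT]) :=
  flatten [seq nseq (Num.truncn ('chi_i 1%g) ^ 2)%N i | i <- enum (Iirr [set: gT])].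

(* "Up to factors of +-1 the eigenvalues of A are the lambda_i, each with
   multiplicity (dim rho_i)^2, and the number of factors equal to 1 is N/2":
   there are signs eps (true = +1, false = -1), one per element of the
   multiset, such that the eigenvalue multiset of A (roots of its
   characteristic polynomial, with multiplicity) is {eps_k * lambda_(m_k)},
   and twice the number of +1 signs is N. *)
Definition pm_spectrum (A : 'M[algC]_#|gT|) (S : {set gT}) (N : nat) : Prop :=
  exists eps : seq bool,
    size eps = size irr_mult_seq /\
    char_poly A = \prod_(p <- zip eps irr_mult_seq)
                    ('X - ((-1) ^+ (~~ p.1) * lam S p.2)%:P) /\
    (2 * count id eps)%N = N.

End Defs.

(* Main.v *)
Require Import Defs.
From HB Require Import structures.
From mathcomp Require Import all_boot all_order all_algebra all_fingroup all_solvable all_field all_character.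
From mathcomp.algebra_tactics Require Import ring.
Import Order.TTheory GRing.Theory Num.Theory.
Local Open Scope ring_scope.
Set Implicit Arguments. Unset Strict Implicit. Unset Printing Implicit Defensive.
Section LA.
Variables (F : fieldType) (n : nat).

Lemma pid_mulE r (X : 'M[F]_n) i j :
  (pid_mx r *m X) i j = if (i < r)%N then X i j else 0.
Proof.
rewrite mxE (bigD1 i) //= big1 ?addr0.
  by rewrite mxE eqxx /=; case: ifP; rewrite ?mul1r ?mul0r.
by move=> k nki; rewrite mxE eq_sym (negbTE (nki : (k != i :> nat))) mul0r.
Qed.

Lemma mul_pidE r (X : 'M[F]_n) i j :
  (X *m pid_mx r) i j = if (j < r)%N then X i j else 0.
Proof.
rewrite mxE (bigD1 j) //= big1 ?addr0.
  by rewrite mxE eqxx /=; case: ifP; rewrite ?mulr1 ?mulr0.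
by move=> k nkj; rewrite mxE (negbTE (nkj : (k != j :> nat))) mulr0.
Qed.

Lemma idem_tri (G : 'M[F]_n) : G *m G = G -> exists L K,
  [/\ L \in unitmx, G = L *m K *m invmx L,
      forall i j : 'I_n, (j < i)%N -> K i j = 0 &
      forall i : 'I_n, K i i = ((i < \rank G)%N)%:R].
Proof.
move=> GG.
set r := \rank G; set L := col_ebase G; set U := row_ebase G.
have eG : L *m pid_mx r *m U = G := mulmx_ebase G.
have uL : L \in unitmx := col_ebase_unit G.
have uU : U \in unitmx := row_ebase_unit G.
have key : pid_mx r *m (U *m L) *m pid_mx r = pid_mx r :> 'M[F]_n.
  have := congr1 (fun X => invmx L *m X *m invmx U) GG.
  by rewrite -eG /= -!mulmxA mulKmx // mulmxV // mulmx1 mulKmx // mulmxV // mulmx1.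
exists L, (pid_mx r *m (U *m L)); split => //.
- by rewrite !mulmxA mulmxK // eG.
- move=> i j ji.
  case: (ltnP i r) => ir.
    move: (congr1 (fun X : 'M[F]_n => X i j) key) => /=.
    by rewrite mul_pidE (ltn_trans ji ir) [in RHS]mxE (gtn_eqF ji) => ->.
  by rewrite pid_mulE ltnNge ir.
- move=> i; case: (ltnP i r) => ir.
    move: (congr1 (fun X : 'M[F]_n => X i i) key) => /=.
    by rewrite mul_pidE ir [in RHS]mxE eqxx ir => ->.
  by rewrite pid_mulE ltnNge ir.
Qed.

Lemma prod_ord_lt (R : comPzSemiRingType) r (x : R) : (r <= n)%N ->
  \prod_(i < n) (if (i < r)%N then x else 1) = x ^+ r.
Proof.
move=> rn; rewrite -big_mkcond /=.
rewrite -[X in \big[_/_]_(i < n | X i) _]/(fun i : 'I_n => true && (i < r)%N).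
by rewrite (big_ord_narrow_cond rn) /= prodr_const card_ord.
Qed.

Lemma sum_ord_lt r : (r <= n)%N ->
  \sum_(i < n) (((i < r)%N)%:R : F) = r%:R.
Proof.
move=> rn; rewrite (eq_bigr (fun i : 'I_n => if (i < r)%N then 1 else 0)); last first.
  by move=> i _; case: ifP.
rewrite -big_mkcond /=.
rewrite -[X in \big[_/_]_(i < n | X i) _]/(fun i : 'I_n => true && (i < r)%N).
by rewrite (big_ord_narrow_cond rn) /= sumr_const card_ord.
Qed.

Lemma idem_tr (G : 'M[F]_n) : G *m G = G -> \tr G = (\rank G)%:R.
Proof.
move=> /idem_tri [L [K [uL -> _ dK]]].
rewrite mxtrace_mulC mulmxA mulVmx // mul1mx /mxtrace.
under eq_bigr do rewrite dK.
by rewrite sum_ord_lt // rank_leq_row.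
Qed.

Lemma idem_det (R : comNzRingType) (f : {rmorphism F -> R}) (G : 'M[F]_n) (c : R) :
  G *m G = G -> \det (1%:M + c *: map_mx f G) = (1 + c) ^+ \rank G.
Proof.
move=> GG; have rn := rank_leq_row G.
move: GG => /idem_tri [L [K [uL eG lK dK]]].
have e1 : map_mx f L *m map_mx f (invmx L) = 1%:M.
  by rewrite -map_mxM mulmxV // map_mx1.
have -> : 1%:M + c *: map_mx f G
    = map_mx f L *m (1%:M + c *: map_mx f K) *m map_mx f (invmx L).
  by rewrite mulmxDr mulmxDl mulmx1 e1 -scalemxAr -scalemxAl eG !map_mxM.
rewrite !det_mulmx mulrAC -det_mulmx e1 det1 mul1r -det_tr det_trig.
  rewrite -(prod_ord_lt (1 + c) rn); apply: eq_bigr => i _.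
  by rewrite !mxE eqxx dK; case: ifP => _; rewrite ?rmorph1 ?rmorph0 ?mulr1 ?mulr0 ?addr0.
apply/forallP => i; apply/forallP => j; apply/implyP => ij; apply/eqP.
rewrite !mxE (lK _ _ ij) rmorph0 mulr0 addr0.
have /negbTE -> : j != i by apply/eqP => e; rewrite e ltnn in ij.
by [].
Qed.
End LA.

Section Fam.
Variables (F : fieldType) (n : nat) (K : finType) (G : K -> 'M[F]_n).
Hypothesis GG : forall k l, G k *m G l = if k == l then G k else 0.
Hypothesis G1 : \sum_k G k = 1%:M.

Lemma fam_det_seq (R : comNzRingType) (f : {rmorphism F -> R}) (c : K -> R) (s : seq K) :
  uniq s ->
  \det (\sum_k (if k \in s then c k else 1) *: map_mx f (G k))
    = \prod_(k <- s) c k ^+ \rank (G k).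
Proof.
elim: s => [_|a s IH] /=.
  under eq_bigr do rewrite scale1r.
  by rewrite -raddf_sum /= G1 map_mx1 det1 big_nil.
case/andP => nas us; rewrite big_cons -IH //.
have GGa : G a *m G a = G a by rewrite GG eqxx.
have -> : c a ^+ \rank (G a) = \det (1%:M + (c a - 1) *: map_mx f (G a)).
  by rewrite idem_det // addrC subrK.
rewrite -det_mulmx.
congr (\det _).
rewrite mulmxDl mul1mx -scalemxAl mulmx_sumr.
have -> : \sum_k map_mx f (G a) *m ((if k \in s then c k else 1) *: map_mx f (G k))
   = map_mx f (G a).
  rewrite (bigD1 a) //= big1 ?addr0.
    by rewrite (negbTE nas) scale1r -map_mxM GGa.
  move=> k /negbTE nka; rewrite -scalemxAr -map_mxM GG eq_sym nka.
  by rewrite raddf0 scaler0.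
rewrite (bigD1 a) //= [in RHS](bigD1 a) //= inE eqxx /= (negbTE nas) scale1r.
rewrite [RHS]addrAC; congr (_ + _).
  by rewrite scalerBl scale1r addrC subrK.
by apply: eq_bigr => k nka; rewrite inE (negbTE nka).
Qed.

Lemma fam_det (R : comNzRingType) (f : {rmorphism F -> R}) (c : K -> R) :
  \det (\sum_k c k *: map_mx f (G k)) = \prod_k c k ^+ \rank (G k).
Proof.
move: (fam_det_seq f c (enum_uniq K)); rewrite big_enum /= => <-.
by congr (\det _); apply: eq_bigr => k _; rewrite mem_enum.
Qed.

Lemma fam_char_poly (mu : K -> F) :
  char_poly (\sum_k mu k *: G k) = \prod_k ('X - (mu k)%:P) ^+ \rank (G k).
Proof.
rewrite -(fam_det (@polyC F) (fun k => 'X - (mu k)%:P)) /char_poly /char_poly_mx; congr (\det _).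
have -> : 'X%:M = 'X *: map_mx polyC (\sum_k G k) :> 'M[{poly F}]_n.
  by rewrite G1 map_mx1 scalemx1.
rewrite !raddf_sum /= -big_split; apply: eq_bigr => k _.
by rewrite map_mxZ /= scalerBl.
Qed.
End Fam.


Section Spec.
Variables (n : nat) (J : finType) (E : J -> 'M[algC]_n) (tau : J -> J)
  (Q : 'M[algC]_n) (lam : J -> algC).
Hypothesis EE : forall i j, E i *m E j = if i == j then E i else 0.
Hypothesis E1 : \sum_i E i = 1%:M.
Hypothesis QQ : Q *m Q = 1%:M.
Hypothesis QE : forall i, Q *m E i = E (tau i) *m Q.
Hypothesis tauK : involutive tau.
Hypothesis lamT : forall i, lam (tau i) = lam i.
Hypothesis trT : forall i, \tr (E (tau i)) = \tr (E i).

Definition P i := if tau i == i then E i else E i + E (tau i).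
Definition sg (b : bool) : algC := if b then 1 else -1.
Definition H b := 2^-1 *: (1%:M + sg b *: Q).
Definition gate i b := if tau i == i then true
  else if (enum_rank i < enum_rank (tau i))%N then b else ~~ b.

Lemma tau_fix i : (tau (tau i) == tau i) = (tau i == i).
Proof. by rewrite tauK eq_sym. Qed.

Lemma gate_tau i b : tau i != i -> gate (tau i) b = ~~ gate i b.
Proof.
move=> nf; rewrite /gate tau_fix (negbTE nf) tauK.
have ne : enum_rank i != enum_rank (tau i).
  by apply: contra nf => /eqP /enum_rank_inj <-.
case: (ltngtP (enum_rank i) (enum_rank (tau i))) ne => /=.
- by [].
- by rewrite negbK.
- by move=> /val_inj ->; rewrite eqxx.
Qed.

Lemma PP i j : P i *m P j = if (j == i) || (j == tau i) then P i else 0.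
Proof.
rewrite /P; case: (eqVneq (tau i) i) => fi; case: (eqVneq (tau j) j) => fj;
  rewrite ?mulmxDl ?mulmxDr !EE.
- case: (eqVneq j i) => [//|ji].
  by rewrite fi (negbTE ji).
- case: (eqVneq j i) => [ji|ji]; first by move: fj; rewrite ji fi eqxx.
  have -> : (i == tau j) = false.
    by apply/negbTE; apply: contra ji => /eqP e; apply/eqP; rewrite -(tauK j) -e fi.
  by rewrite fi (negbTE ji) addr0.
- case: (eqVneq j i) => [ji|ji]; first by move: fi; rewrite -ji fj eqxx.
  have fij : (tau i == j) = false.
    apply/negbTE; apply: contra ji => /eqP e; apply/eqP.
    by move: (congr1 tau e); rewrite tauK fj => ->.
  by rewrite fij addr0 [j == tau i]eq_sym fij.

- case: (eqVneq j i) => [->|ji].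
    by rewrite eqxx (negbTE fi) eq_sym (negbTE fi) addr0 add0r.
  case: (eqVneq j (tau i)) => [->|ji'].
    by rewrite tauK eqxx (negbTE fi) add0r addr0 addrC.
  have -> : (i == tau j) = false.
    by apply/negbTE; apply: contra ji' => /eqP ->; rewrite tauK.
  have -> : (tau i == tau j) = false.
    by apply/negbTE; apply: contra ji => /eqP /(can_inj tauK) ->.
  by rewrite !addr0.
Qed.



Lemma QP i : Q *m P i = P i *m Q.
Proof.
rewrite /P; case: (eqVneq (tau i) i) => fi; rewrite ?mulmxDl ?mulmxDr !QE ?fi //.
by rewrite tauK addrC.
Qed.

Lemma two_neq0 : (2%:R : algC) != 0. Proof. by rewrite pnatr_eq0. Qed.

Lemma Hsg b : H b = 2^-1 *: (1%:M + (if b then Q else - Q)).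
Proof. by rewrite /H /sg; case: b; rewrite ?scale1r ?scaleN1r. Qed.

Lemma HH b b' : H b *m H b' = if b == b' then H b else 0.
Proof.
rewrite !Hsg -scalemxAl -scalemxAr scalerA.
have e : forall X : 'M[algC]_n, X + X = 2%:R *: X by move=> X; rewrite scaler_nat mulr2n.
case: b; case: b'; rewrite /= mulmxDl !mulmxDr !mul1mx !mulmx1 ?mulmxN ?mulNmx ?QQ ?opprK.
- by rewrite [Q + 1%:M]addrC e scalerA divfK ?two_neq0.
- by rewrite addrA subrK subrr scaler0.
- by rewrite addrA addrK subrr scaler0.
- by rewrite [- Q + 1%:M]addrC e scalerA divfK ?two_neq0.
Qed.

Lemma H1 : H true + H false = 1%:M.
Proof.
rewrite !Hsg -scalerDr addrACA subrr addr0.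
by rewrite -mulr2n -scaler_nat scalerA mulVf ?two_neq0 ?scale1r.
Qed.

Lemma QH b : Q *m H b = sg b *: H b.
Proof.
rewrite /H -scalemxAr scalerA mulrC -scalerA; congr (_ *: _).
rewrite mulmxDr mulmx1 -scalemxAr QQ scalemx1 scalerDr /sg.
case: b; rewrite ?scale1r ?scaleN1r ?opprK ?scalemx1.
  by rewrite addrC.
by rewrite addrC raddfN.
Qed.

Lemma PH i b : P i *m H b = H b *m P i.
Proof.
by rewrite /H -scalemxAl -scalemxAr mulmxDr mulmxDl mulmx1 mul1mx -scalemxAr -scalemxAl QP.
Qed.

Lemma gate_fix i b : tau i == i -> gate i b.
Proof. by rewrite /gate => ->. Qed.

Lemma sum_gate (c : J -> algC) b : (forall i, c (tau i) = c i) ->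
  \sum_i (if gate i b then c i *: P i else 0) = \sum_i c i *: E i.
Proof.
move=> cT.
have -> : \sum_i (if gate i b then c i *: P i else 0)
  = \sum_i (if gate i b then c i *: E i else 0)
  + \sum_i (if gate i b && (tau i != i) then c i *: E (tau i) else 0).
  rewrite -big_split /=; apply: eq_bigr => i _; rewrite /P.
  case: (eqVneq (tau i) i) => fi; rewrite ?andbF ?andbT ?addr0 //.
  by case: ifP; rewrite ?scalerDr ?addr0.
rewrite [X in _ + X](reindex_inj (inv_inj tauK)) /=.
rewrite -big_split /=; apply: eq_bigr => i _.
rewrite tauK [i == tau i]eq_sym.
case: (eqVneq (tau i) i) => fi.
  by rewrite gate_fix ?fi // andbF addr0.
by rewrite gate_tau // cT; case: (gate i b); rewrite ?addr0 ?add0r.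
Qed.

Definition GF (k : J * bool) := if gate k.1 k.2 then P k.1 *m H k.2 else 0.
Definition mu (k : J * bool) := sg k.2 * lam k.1.

Lemma GFF k l : GF k *m GF l = if k == l then GF k else 0.
Proof.
case: k => i b; case: l => j b'; rewrite /GF /=.
case gi: (gate i b); last by rewrite mul0mx; case: ifP.
case gj: (gate j b'); first last.
  rewrite mulmx0; case: ifP => // /eqP [ij bb]; move: gj; by rewrite -ij -bb gi.
rewrite mulmxA -(mulmxA (P i)) -PH mulmxA PP -mulmxA HH.
move: gj; case: (eqVneq b b') => [<-|bb] gj; last first.
  by rewrite mulmx0 xpair_eqE (negbTE bb) andbF.
rewrite xpair_eqE eqxx andbT [i == j]eq_sym.
case: (eqVneq j i) => //= ji.
case: (eqVneq j (tau i)) => [jt|]; last by rewrite mul0mx.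
have fi : tau i != i by rewrite -jt.
by move: gj; rewrite jt gate_tau // gi.
Qed.

Lemma sumGF (c : J -> algC) b : (forall i, c (tau i) = c i) ->
  \sum_i (if gate i b then c i *: (P i *m H b) else 0) = (\sum_i c i *: E i) *m H b.
Proof.
move=> cT; rewrite -(sum_gate b cT) mulmx_suml; apply: eq_bigr => i _.
by case: ifP; rewrite ?mul0mx // scalemxAl.
Qed.

Lemma sum_pair (V : nmodType) (f : J * bool -> V) :
  \sum_k f k = \sum_i (f (i, true) + f (i, false)).
Proof.
transitivity (\sum_(p : J * bool) f (p.1, p.2)); first by apply: eq_bigr => -[].
rewrite -(pair_bigA _ (fun i b => f (i, b))) /=.
by apply: eq_bigr => i _; rewrite big_bool.
Qed.

Lemma prod_pair (R : comPzSemiRingType) (f : J * bool -> R) :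
  \prod_k f k = \prod_i (f (i, true) * f (i, false)).
Proof.
transitivity (\prod_(p : J * bool) f (p.1, p.2)); first by apply: eq_bigr => -[].
rewrite -(pair_bigA _ (fun i b => f (i, b))) /=.
by apply: eq_bigr => i _; rewrite big_bool.
Qed.

Lemma GF1 : \sum_k GF k = 1%:M.
Proof.
rewrite sum_pair big_split /= /GF /=.
have e b : \sum_i (if gate i b then P i *m H b else 0) = H b.
  rewrite -[RHS]mul1mx -E1.
  under eq_bigr do rewrite -[P _ *m _]scale1r.
  rewrite (@sumGF (fun _ => 1)) //.
  by congr (_ *m _); apply: eq_bigr => i _; rewrite scale1r.
by rewrite !e H1.
Qed.

Lemma QcommT : Q *m (\sum_i lam i *: E i) = (\sum_i lam i *: E i) *m Q.
Proof.
rewrite mulmx_sumr mulmx_suml.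
rewrite [RHS](reindex_inj (inv_inj tauK)) /=; apply: eq_bigr => i _.
by rewrite -scalemxAr QE lamT scalemxAl.
Qed.

Lemma GFA : Q *m (\sum_i lam i *: E i) = \sum_k mu k *: GF k.
Proof.
rewrite QcommT sum_pair big_split /= /GF /mu /=.
have e b : \sum_i (sg b * lam i) *: (if gate i b then P i *m H b else 0)
    = sg b *: ((\sum_i lam i *: E i) *m H b).
  rewrite -(sumGF b lamT) scaler_sumr; apply: eq_bigr => i _.
  by case: ifP; rewrite ?scaler0 // scalerA.
rewrite (e true) (e false) !scalemxAr -mulmxDr -!QH -mulmxDr H1 mulmx1 //.
Qed.

Lemma GFidem k : GF k *m GF k = GF k.
Proof. by rewrite GFF eqxx. Qed.

Lemma trE_Q i : tau i != i -> \tr (E i *m Q) = 0.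
Proof.
move=> fi.
have -> : E i *m Q = E i *m (E i *m Q) by rewrite mulmxA EE eqxx.
rewrite mxtrace_mulC -mulmxA QE mulmxA EE eq_sym (negbTE fi) mul0mx.
by rewrite mxtrace0.
Qed.

Lemma trGF i b : \tr (GF (i, b)) =
  if gate i b then 2^-1 * (\tr (P i) + sg b * \tr (P i *m Q)) else 0.
Proof.
rewrite /GF /=; case: ifP => _; last by rewrite mxtrace0.
by rewrite /H -scalemxAr mxtraceZ mulmxDr mulmx1 -scalemxAr mxtraceD mxtraceZ.
Qed.

Lemma rank_split i :
  (\rank (GF (i, true)) + \rank (GF (i, false)))%N = \rank (E i).
Proof.
apply/eqP; rewrite -(@eqr_nat algC) natrD -!idem_tr ?GFidem // ?EE ?eqxx //.
rewrite !trGF /P; apply/eqP.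
case: (eqVneq (tau i) i) => fi.
  rewrite !gate_fix ?fi // /sg.
  by field.
have z : \tr ((E i + E (tau i)) *m Q) = 0.
  by rewrite mulmxDl mxtraceD !trE_Q ?tau_fix // addr0.
rewrite !z !mulr0 !addr0 mxtraceD trT.
rewrite /gate (negbTE fi); case: (enum_rank i < enum_rank (tau i))%N => /=;
  by rewrite ?addr0 ?add0r; field.
Qed.

Lemma sum_a : (((\sum_i \rank (GF (i, true))) * 2)%N%:R : algC) = n%:R + \tr Q.
Proof.
rewrite natrM natr_sum.
under eq_bigr do rewrite -idem_tr ?GFidem //.
rewrite -raddf_sum /= /GF /=.
have -> : \sum_i (if gate i true then P i *m H true else 0) = H true.
  rewrite -[RHS]mul1mx -E1.
  under eq_bigr do rewrite -[P _ *m _]scale1r.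
  rewrite (@sumGF (fun _ => 1)) //.
  by congr (_ *m _); apply: eq_bigr => i _; rewrite scale1r.
by rewrite /H mxtraceZ mxtraceD mxtrace1 /sg scale1r; field.
Qed.

Lemma char_A : char_poly (Q *m \sum_i lam i *: E i) =
  \prod_i (('X - (lam i)%:P) ^+ \rank (GF (i, true)) *
           ('X + (lam i)%:P) ^+ \rank (GF (i, false))).
Proof.
rewrite GFA (fam_char_poly GFF GF1) prod_pair; apply: eq_bigr => i _.
by rewrite /mu /sg /= mul1r mulN1r polyCN opprK.
Qed.

Theorem spec_main : exists a : J -> nat,
  [/\ forall i, (a i <= \rank (E i))%N,
      char_poly (Q *m \sum_i lam i *: E i) =
        \prod_i (('X - (lam i)%:P) ^+ a i * ('X + (lam i)%:P) ^+ (\rank (E i) - a i)) &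
      (((\sum_i a i) * 2)%N%:R : algC) = n%:R + \tr Q].
Proof.
exists (fun i => \rank (GF (i, true))); split.
- by move=> i; rewrite -rank_split leq_addr.
- rewrite char_A; apply: eq_bigr => i _; by rewrite -rank_split addKn.
- exact: sum_a.
Qed.
End Spec.


Section Grp.
Variable gT : finGroupType.
Local Notation n := #|gT|.

Definition km (K : gT -> gT -> algC) : 'M[algC]_n := \matrix_(i, j) K (vtx i) (vtx j).

Lemma sum_vtx (f : gT -> algC) : \sum_(k < n) f (vtx k) = \sum_x f x.
Proof. by rewrite /vtx -(big_enum_val (A := gT)). Qed.

Lemma km_mul K1 K2 : km K1 *m km K2 = km (fun x y => \sum_z K1 x z * K2 z y).
Proof.
apply/matrixP => i j; rewrite !mxE.
rewrite -(sum_vtx (fun z => K1 (vtx i) z * K2 z (vtx j))).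
by apply: eq_bigr => k _; rewrite !mxE.
Qed.

Lemma km_tr K : \tr (km K) = \sum_x K x x.
Proof.
rewrite /mxtrace -(sum_vtx (fun x => K x x)).
by apply: eq_bigr => k _; rewrite !mxE.
Qed.

Lemma km_ext K1 K2 : (forall x y, K1 x y = K2 x y) -> km K1 = km K2.
Proof. by move=> e; apply/matrixP => i j; rewrite !mxE e. Qed.

Lemma km1 : km (fun x y => (x == y)%:R) = 1%:M.
Proof.
apply/matrixP => i j; rewrite !mxE /vtx.
by rewrite (inj_eq enum_val_inj).
Qed.

Lemma km_sum (I : finType) (c : I -> algC) (K : I -> gT -> gT -> algC) :
  \sum_i c i *: km (K i) = km (fun x y => \sum_i c i * K i x y).
Proof.
apply/matrixP => i j; rewrite !mxE summxE.
by apply: eq_bigr => k _; rewrite !mxE.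
Qed.


Local Notation G := [set: gT].

Lemma n_neq0 : (n%:R : algC) != 0.
Proof. by rewrite pnatr_eq0 -lt0n; apply/card_gt0P; exists 1%g. Qed.

Lemma chiC (i : Iirr G) a b : 'chi_i (a * b)%g = 'chi_i (b * a)%g.
Proof.
by rewrite -(cfunJ _ (a * b)%g (in_setT a)) conjgE !mulgA mulVg mul1g.
Qed.

Definition Ek (i : Iirr G) := km (fun x y => 'chi_i 1%g / n%:R * 'chi_i (x^-1 * y)%g).

Lemma conv (i j : Iirr G) x y :
  \sum_z 'chi_i (x^-1 * z)%g * 'chi_j (z^-1 * y)%g
    = (i == j)%:R * (n%:R * ('chi_i (x^-1 * y)%g / 'chi_i 1%g)).
Proof.
have h := generalized_orthogonality_relation (x^-1 * y)%g i j.
rewrite cardsT in h; rewrite mulrCA -h mulrA mulfV ?n_neq0 // mul1r.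
rewrite (reindex_inj (mulgI y)) /=.
rewrite [RHS](eq_bigl xpredT) => [|u]; last by rewrite in_setT.
apply: eq_bigr => u _.
by rewrite invMg -(mulgA u^-1)%g mulVg mulg1 mulgA chiC.
Qed.

Lemma EE i j : Ek i *m Ek j = if i == j then Ek i else 0.
Proof.
rewrite km_mul.
have -> : (0 : 'M[algC]_n) = km (fun _ _ => 0) by apply/matrixP => a b; rewrite !mxE.
rewrite -fun_if; apply: km_ext => x y.
have -> : \sum_z 'chi_i 1%g / n%:R * 'chi_i (x^-1 * z)%g *
             ('chi_j 1%g / n%:R * 'chi_j (z^-1 * y)%g)
    = 'chi_i 1%g / n%:R * ('chi_j 1%g / n%:R) *
      \sum_z 'chi_i (x^-1 * z)%g * 'chi_j (z^-1 * y)%g.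
  rewrite mulr_sumr; apply: eq_bigr => z _; ring.
rewrite conv; case: (eqVneq i j) => [<-|_]; last by rewrite mul0r mulr0.
have := irr1_neq0 i; have := n_neq0; move=> h1 h2.
by rewrite /= mulr1n mul1r; field; rewrite h1 h2.
Qed.

Lemma E1 : \sum_i Ek i = 1%:M.
Proof.
rewrite -km1 (eq_bigr (fun i => 1 *: Ek i)) => [|i _]; last by rewrite scale1r.
rewrite km_sum; apply: km_ext => x y.
have h := congr1 (fun phi : 'CF(G) => phi (x^-1 * y)%g) (cfReg_sum G).
rewrite /= cfRegE sum_cfunE cardsT in h.
have := n_neq0 => nz.
transitivity (n%:R^-1 * \sum_(i < Nirr G) ('chi[G]_i 1%g *: 'chi[G]_i) (x^-1 * y)%g).
  rewrite mulr_sumr; apply: eq_bigr => i _; rewrite cfunE; field; by rewrite nz.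
rewrite -h -eq_mulVg1; case: (x == y) => /=.
  by rewrite mulr1n mulVf.
by rewrite mulr0n mulr0.
Qed.

Lemma trE i : \tr (Ek i) = 'chi_i 1%g ^+ 2.
Proof.
rewrite km_tr; under eq_bigr do rewrite mulVg.
rewrite sumr_const (_ : #|xpredT| = n); last by apply: eq_card.
have := n_neq0 => nz.
by rewrite -mulr_natr; field; rewrite nz.
Qed.


Lemma rankE i : \rank (Ek i) = (Num.truncn ('chi_i 1%g) ^ 2)%N.
Proof.
apply/eqP; rewrite -(@eqr_nat algC) -idem_tr ?EE ?eqxx // trE natrX.
by rewrite truncnK ?Cnat_irr1.
Qed.

Definition Qm (pi : gT -> gT) := km (fun x y => (y == pi x)%:R).

Lemma sum_delta (F : gT -> algC) a : \sum_z (z == a)%:R * F z = F a.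
Proof.
rewrite (bigD1 a) //= eqxx mul1r big1 ?addr0 // => z /negbTE ->.
by rewrite mul0r.
Qed.

Lemma QQ pi : involutive pi -> Qm pi *m Qm pi = 1%:M.
Proof.
move=> piK; rewrite km_mul -km1; apply: km_ext => x y.
by rewrite sum_delta piK eq_sym.
Qed.

Lemma QmE pi K : Qm pi *m km K = km (fun x y => K (pi x) y).
Proof. by rewrite km_mul; apply: km_ext => x y; rewrite sum_delta. Qed.

Lemma EQm pi K : involutive pi -> km K *m Qm pi = km (fun x y => K x (pi y)).
Proof.
move=> piK; rewrite km_mul; apply: km_ext => x y.
rewrite -(sum_delta (K x) (pi y)); apply: eq_bigr => z _.
rewrite mulrC; congr (_ * _); congr (_%:R).
congr (nat_of_bool _); by apply/idP/idP => /eqP e; apply/eqP; rewrite e piK.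
Qed.

Lemma trQ pi : \tr (Qm pi) = #|[set g | g == pi g]|%:R.
Proof.
rewrite km_tr -sum1_card natr_sum [RHS]big_mkcond /=; apply: eq_bigr => x _.
by rewrite inE; case: (x == pi x).
Qed.

Section S.
Variable S : {set gT}.
Hypothesis Ssym : forall s, s \in S -> (s^-1)%g \in S.
Hypothesis Sconj : forall s g, s \in S -> (s ^ g)%g \in S.

Definition Tm := km (fun x y => ((x^-1 * y)%g \in S)%:R).

Lemma indS z : (cfun_indicator G S) z = (z \in S)%:R.
Proof.
rewrite cfunElock genGid in_setT /=.
suff -> : ((z ^: [set: gT])%g \subset S) = (z \in S) by [].
apply/idP/idP => [sub|zS].
  exact: (subsetP sub) (class_refl G z).
by apply/subsetP => _ /imsetP [h _ ->]; apply: Sconj.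
Qed.

Lemma sumS_inv (F : gT -> algC) : \sum_(s in S) F (s^-1)%g = \sum_(s in S) F s.
Proof.
rewrite [RHS](reindex_inj invg_inj) /=; apply: eq_bigl => s.
by apply/idP/idP => /Ssym; rewrite ?invgK.
Qed.

Lemma dotS i : '[cfun_indicator G S, 'chi_i] = n%:R^-1 * \sum_(s in S) 'chi_i s.
Proof.
rewrite cfdotE cardsT; congr (_ * _).
transitivity (\sum_x (cfun_indicator G S x * ('chi_i x)^*)).
  by apply: eq_bigl => x; rewrite in_setT.
rewrite -sumS_inv [RHS]big_mkcond /=.
apply: eq_bigr => x _; rewrite indS -irr_inv.
by case: (x \in S); rewrite ?mul1r ?mul0r.
Qed.

Lemma Texp : Tm = \sum_i lam S i *: Ek i.
Proof.
rewrite km_sum; apply: km_ext => x y.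
have e := congr1 (fun phi : 'CF(G) => phi (x^-1 * y)%g) (cfun_sum_cfdot (cfun_indicator G S)).
rewrite /= indS sum_cfunE in e; rewrite e; apply: eq_bigr => i _.
rewrite cfunE dotS /lam.
have := irr1_neq0 i; have := n_neq0 => h1 h2.
by field; rewrite h1 h2.
Qed.
End S.
End Grp.


Section Seqs.
Variables (J : Type) (a m : J -> nat).
Hypothesis ha : forall i, (a i <= m i)%N.

Definition blk i := nseq (a i) true ++ nseq (m i - a i) false.

Lemma zip_nseq (A B : Type) k (x : A) (y : B) : zip (nseq k x) (nseq k y) = nseq k (x, y).
Proof. by elim: k => //= k ->. Qed.

Lemma size_blocks l :
  size (flatten [seq blk i | i <- l]) = size (flatten [seq nseq (m i) i | i <- l]).
Proof.
by elim: l => //= i l IH; rewrite !size_cat !size_nseq IH subnKC.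
Qed.

Lemma zip_blocks l :
  zip (flatten [seq blk i | i <- l]) (flatten [seq nseq (m i) i | i <- l])
  = flatten [seq nseq (a i) (true, i) ++ nseq (m i - a i) (false, i) | i <- l].
Proof.
elim: l => //= i l IH.
rewrite zip_cat ?size_cat ?size_nseq ?subnKC // IH /blk.
rewrite -{2}(subnKC (ha i)) nseqD zip_cat ?size_nseq // !zip_nseq //.
Qed.

Lemma prod_nseq (R : comPzSemiRingType) (F : bool * J -> R) k x :
  \prod_(p <- nseq k x) F p = F x ^+ k.
Proof. by elim: k => [|k IH]; rewrite ?big_nil ?expr0 //= big_cons IH exprS. Qed.

Lemma prod_blocks (R : comPzSemiRingType) (F : bool * J -> R) l :
  \prod_(p <- flatten [seq nseq (a i) (true, i) ++ nseq (m i - a i) (false, i) | i <- l]) F p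
  = \prod_(i <- l) (F (true, i) ^+ a i * F (false, i) ^+ (m i - a i)).
Proof.
elim: l => [|i l IH]; first by rewrite !big_nil.
by rewrite /= big_cat big_cat /= !prod_nseq IH big_cons.
Qed.

Lemma count_blocks l :
  count id (flatten [seq blk i | i <- l]) = \sum_(i <- l) a i.
Proof.
elim: l => [|i l IH]; first by rewrite big_nil.
by rewrite /= count_cat IH big_cons /blk count_cat !count_nseq /= mul1n mul0n addn0.
Qed.
End Seqs.

Section Gen.
Variables (gT : finGroupType) (S : {set gT}).
Hypothesis Ssym : forall s, s \in S -> (s^-1)%g \in S.
Hypothesis Sconj : forall s g, s \in S -> (s ^ g)%g \in S.
Variables (pi : gT -> gT) (tau : Iirr [set: gT] -> Iirr [set: gT]).
Hypothesis piK : involutive pi.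
Hypothesis tauK : involutive tau.
Hypothesis h1 : forall i x y, 'chi_i ((pi x)^-1 * y)%g = 'chi_(tau i) (x^-1 * pi y)%g.
Hypothesis h2 : forall i, 'chi_(tau i) 1%g = 'chi_i 1%g.
Hypothesis h3 : forall i, lam S (tau i) = lam S i.

Theorem gen_pm : pm_spectrum (Qm pi *m Tm S) S (#|gT| + #|[set g : gT | g == pi g]|).
Proof.
have QE i : Qm pi *m Ek i = Ek (tau i) *m Qm pi.
  by rewrite QmE EQm //; apply: km_ext => x y; rewrite h1 h2.
have trT i : \tr (Ek (tau i)) = \tr (Ek i) by rewrite !trE h2.
have [a [ha hcp hsum]] := spec_main (@EE gT) (@E1 gT) (QQ piK) QE tauK h3 trT.
set m := fun i : Iirr [set: gT] => (Num.truncn ('chi_i 1%g) ^ 2)%N.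
have rE i : \rank (Ek i) = m i by rewrite rankE.
have ha' i : (a i <= m i)%N by rewrite -rE.
rewrite /pm_spectrum (Texp Ssym Sconj).
exists (flatten [seq blk a m i | i <- enum (Iirr [set: gT])]); split; [|split].
- by rewrite /irr_mult_seq size_blocks.
- rewrite hcp /irr_mult_seq zip_blocks // prod_blocks big_enum /=.
  apply: eq_big => [i|i _] //.
  by rewrite rE expr0 expr1 mul1r mulN1r polyCN opprK.
- rewrite count_blocks big_enum /=.
  apply/eqP; rewrite -(@eqr_nat algC) mulnC hsum trQ natrD //.
Qed.
End Gen.

Section Gen2.
Variables (gT : finGroupType) (S : {set gT}).
Hypothesis Ssym : forall s, s \in S -> (s^-1)%g \in S.
Hypothesis Sconj : forall s g, s \in S -> (s ^ g)%g \in S.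
Variables (pi : gT -> gT) (tau : Iirr [set: gT] -> Iirr [set: gT]).
Hypothesis piK : involutive pi.
Hypothesis pi1 : pi 1%g = 1%g.
Hypothesis piS : forall s, (pi s \in S) = (s \in S).
Hypothesis hchi : forall i z, 'chi_(tau i) z = 'chi_i (pi z).
Hypothesis hmul : forall (i : Iirr [set: gT]) x y, 'chi_i (pi (x^-1 * pi y))%g = 'chi_i ((pi x)^-1 * y)%g.

Theorem gen_pm2 : pm_spectrum (Qm pi *m Tm S) S (#|gT| + #|[set g : gT | g == pi g]|).
Proof.
apply: (@gen_pm gT S Ssym Sconj pi tau piK).
- move=> i; apply: irr_inj; apply/cfunP => z.
  by rewrite !hchi piK.
- by move=> i x y; rewrite hchi hmul.
- by move=> i; rewrite hchi pi1.
- move=> i; rewrite /lam hchi pi1; congr (_ / _).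
  under eq_bigr do rewrite hchi.
  rewrite [RHS](reindex_inj (can_inj piK)) /=.
  by apply: eq_bigl => s; rewrite piS.
Qed.
End Gen2.


Section Final.
Variable gT : finGroupType.

Lemma card_sel (S : {set gT}) (c : gT) (Pr : gT -> bool) :
  (forall s, Pr s = (s == c)) ->
  (#|[set s in S | Pr s]|%:R : algC) = (c \in S)%:R.
Proof.
move=> e.
have -> : [set s in S | Pr s] = if c \in S then [set c] else set0.
  apply/setP => s; rewrite !inE e; case: ifP => cS; rewrite ?inE.
    by case: (eqVneq s c) => [->|]; rewrite ?cS ?andbF ?andbT.
  by case: (eqVneq s c) => [->|]; rewrite ?cS ?andbF.
by case: ifP; rewrite ?cards1 ?cards0.
Qed.

Lemma adj_caysum (S : {set gT}) :
  adjmx (@caysum_edge gT) S = Qm (fun x => x^-1)%g *m Tm S.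
Proof.
rewrite QmE /Tm; apply/matrixP => i j; rewrite !mxE invgK.
apply: card_sel => s; rewrite /caysum_edge.
by apply/eqP/eqP => [->|->]; rewrite ?mulKVg ?mulKg.
Qed.

End Final.

Unset Implicit Arguments.

Theorem theorem3p1 (gT : finGroupType) (sigma : {perm gT}) (S : {set gT}) :
  (4 <= #|gT|)%N ->
  sigma \in Aut [set: gT] -> #[sigma]%g = 2%N ->
  (forall s, s \in S -> (s^-1)%g \in S) ->
  (forall s g, s \in S -> (s ^ g)%g \in S) ->
  pm_spectrum (adjmx (@caysum_edge gT) S) S
    (#|gT| + #|[set g : gT | g == (g^-1)%g]|)%N /\
  (sigma @: S = S ->
    pm_spectrum (adjmx (tcay_edge sigma) S) S
      (#|gT| + #|[set g : gT | g == sigma g]|)%N /\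
    pm_spectrum (adjmx (tcaysum_edge sigma) S) S
      (#|gT| + #|[set g : gT | g == ((sigma g)^-1)%g]|)%N).
Proof.
move=> _ Asig osig Ssym Sconj.
have chiV (i : Iirr [set: gT]) z : 'chi_(conjC_Iirr i) z = 'chi_i (z^-1)%g.
  by rewrite conjC_IirrE cfConjCE irr_inv.
split.
  rewrite adj_caysum; apply: (@gen_pm2 gT S Ssym Sconj _ (@conjC_Iirr _ _)).
  - exact: invgK.
  - exact: invg1.
  - move=> s /=; apply/idP/idP => /Ssym; by rewrite ?invgK.
  - exact: chiV.
  - by move=> i x y; rewrite invMg !invgK chiC.
move=> sigS.
have sK : involutive sigma.
  have e : (sigma ^+ 2 = 1)%g by rewrite -osig expg_order.
  move=> x; have := congr1 (fun p : {perm gT} => p x) e.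
  by rewrite /= expgS expg1 permM perm1.
have sM x y : sigma (x * y)%g = (sigma x * sigma y)%g.
  by rewrite -!(autmE Asig) morphM ?in_setT.
have s1 : sigma 1%g = 1%g by rewrite -(autmE Asig) morph1.
have sV x : sigma (x^-1)%g = (sigma x)^-1%g.
  by rewrite -!(autmE Asig) morphV ?in_setT.
have sS s : (sigma s \in S) = (s \in S).
  apply/idP/idP => h.
    rewrite -sigS; apply/imsetP; exists (sigma s) => //; by rewrite sK.
  by rewrite -sigS; apply: imset_f.
have isoG : isom [set: gT] [set: gT] (autm Asig).
  by apply/isomP; split; [exact: injm_autm | exact: im_autm].
pose ts := isom_Iirr isoG.
have hts i z : 'chi_(ts i) z = 'chi_i (sigma z).
  have e : autm Asig (sigma z) = z by rewrite autmE sK.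
  by rewrite /ts isom_IirrE -{1}e cfIsomE ?in_setT.
split.
  have -> : adjmx (tcay_edge sigma) S = Qm sigma *m Tm S.
    rewrite QmE /Tm; apply/matrixP => i j; rewrite !mxE.
    rewrite -sS sM sV sK.
    apply: card_sel => s; rewrite /tcay_edge.
    apply/eqP/eqP => [->|->]; first by rewrite sK mulKg.
    by rewrite mulKVg sK.
  apply: (@gen_pm2 gT S Ssym Sconj _ ts) => //.
  by move=> i x y; rewrite sM sV sK.
have -> : adjmx (tcaysum_edge sigma) S = Qm (fun x => (sigma x)^-1)%g *m Tm S.
  rewrite QmE /Tm; apply/matrixP => i j; rewrite !mxE invgK.
  rewrite -sS sM sK.
  apply: card_sel => s; rewrite /tcaysum_edge.
  apply/eqP/eqP => [->|->]; first by rewrite sK mulKVg.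
  by rewrite mulKg sK.
apply: (@gen_pm2 gT S Ssym Sconj _ (fun i => conjC_Iirr (ts i))).
- by move=> x; rewrite sV sK invgK.
- by rewrite s1 invg1.
- move=> s /=; apply/idP/idP => [/Ssym|h].
    by rewrite invgK sS.
  by apply: Ssym; rewrite sS.
- by move=> i z; rewrite chiV hts sV.
- by move=> i x y /=; rewrite sM !sV sK invMg !invgK chiC.
Qed.
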